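(* Let $\Delta$ be a finite set with $|\Delta|\ge2$, $\ell\ge2$, $\Omega=\Delta^\ell$, $W=\mathrm{Sym}\,\Delta\wr S_\ell$ in product action on $\Omega$, $G\le W$, and let $M$ be a minimal normal subgroup of $G$ transitive on $\Omega$, $M=T_1\times\cdots\times T_k$ with the $T_i$ isomorphic finite simple groups. Let $\Gamma$ be a connected graph with vertex set $\Omega$ with $G\le\mathrm{Aut}\,\Gamma$. Suppose $\Gamma$ is $M$-arc-transitive and the inclusion $G\le W$ is normal. Then $\Gamma\cong(\Gamma_1)^\ell$, where $\Gamma_1$ is the graph with vertex set $\Delta$ whose edge set is the $M^{(1)}$-orbit of $\{\alpha_1,\beta_1\}$, with $\alpha_1,\beta_1\in\Delta$ chosen so that $(\alpha_1,\dots,\alpha_1)$ and $(\beta_1,\beta_2,\dots,\beta_\ell)$ are adjacent in $\Gamma$ for some $\beta_2,\dots,\beta_\ell\in\Delta$. In particular, $\Gamma$ is not $(G,2)$-arc-transitive.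
   Context: Product action: $(\delta_1,\dots,\delta_\ell)^{(g_1,\dots,g_\ell)h}=(\delta_{1h^{-1}}g_{1h^{-1}},\dots,\delta_{\ell h^{-1}}g_{\ell h^{-1}})$. Let $\pi:W\to S_\ell$ be the natural projection, $W_j$ the stabiliser of $j$ under $\pi$, $W_j=\mathrm{Sym}\,\Delta\times(\mathrm{Sym}\,\Delta\wr S_{\ell-1})$ with the first factor on the $j$-th coordinate; the component $H^{(j)}$ of $H\le W$ is the projection of $H\cap W_j$ onto the first factor. When $M$ is non-abelian, $M^{(j)}$ is identified with the product of those $T_i$ not in the kernel of $M\to M^{(j)}$; the inclusion $G\le W$ is normal if $M$ is non-abelian and each $T_i$ lies in exactly one $M^{(j)}$ (equivalently $M=\prod_jM^{(j)}$). The direct product $(\Gamma_1)^\ell$ has vertex set $V(\Gamma_1)^\ell$, with $(\gamma_1,\dots,\gamma_\ell)$ adjacent to $(\gamma'_1,\dots,\gamma'_\ell)$ iff $\gamma_i$ is adjacent to $\gamma'_i$ in $\Gamma_1$ for all $i$. $\Gamma$ is $M$-arc-transitive if $M$ is transitive on ordered pairs of adjacent vertices; it is $(G,2)$-arc-transitive if $G$ is transitive on $2$-arcs, i.e. sequences $(v_0,v_1,v_2)$ with $v_0\sim v_1\sim v_2$ and $v_0\ne v_2$. *)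

(* Defs.v *)
From mathcomp Require Import all_boot all_fingroup all_solvable.
Set Implicit Arguments. Unset Strict Implicit. Unset Printing Implicit Defensive.

Local Open Scope group_scope.

Section Wreath.
Variables (D : finType) (l : nat).

(* MathComp permutations compose as right
   actions ((s * t) x = t (s x)), matching the paper's exponent notation. *)
Definition wr_act (g : {ffun 'I_l -> {perm D}}) (h : {perm 'I_l})
    (x : {ffun 'I_l -> D}) : {ffun 'I_l -> D} :=
  [ffun i => g (h^-1 i) (x (h^-1 i))].

Definition wreath_set : {set {perm {ffun 'I_l -> D}}} :=
  [set s : {perm {ffun 'I_l -> D}} | [exists g : {ffun 'I_l -> {perm D}}, exists h : {perm 'I_l},
            [forall x, s x == wr_act g h x]]].

Definition in_Wj (j : 'I_l) (s : {perm {ffun 'I_l -> D}}) : bool :=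
  [exists g : {ffun 'I_l -> {perm D}}, exists h : {perm 'I_l},
     (h j == j) && [forall x, s x == wr_act g h x]].

Definition component (H : {set {perm {ffun 'I_l -> D}}}) (j : 'I_l)
    : {set {perm D}} :=
  [set p : {perm D} | [exists s in H,
      in_Wj j s && [forall x : {ffun 'I_l -> D}, s x j == p (x j)]]].

Definition base_prod (K : 'I_l -> {set {perm D}})
    : {set {perm {ffun 'I_l -> D}}} :=
  [set s : {perm {ffun 'I_l -> D}} | [exists g : {ffun 'I_l -> {perm D}},
     [forall i, g i \in K i] && [forall x, s x == wr_act g 1 x]]].

Definition normal_inclusion (M : {set {perm {ffun 'I_l -> D}}}) : Prop :=
  ~~ abelian M /\ M = base_prod (component M).

Definition pow_graph (e1 : rel D) : rel {ffun 'I_l -> D} :=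
  fun x y => [forall i, e1 (x i) (y i)].

End Wreath.

Definition orbit_graph (D : finType) (H : {set {perm D}}) (a b : D) : rel D :=
  fun u v => [exists p in H,
     ((p a == u) && (p b == v)) || ((p a == v) && (p b == u))].

Definition graph_iso (V1 V2 : finType) (e1 : rel V1) (e2 : rel V2) : Prop :=
  exists f : V1 -> V2, bijective f /\ forall x y, e2 (f x) (f y) = e1 x y.

Definition is_aut (V : finType) (e : rel V) (s : {perm V}) : Prop :=
  forall x y, e (s x) (s y) = e x y.

Definition arc_transitive (V : finType) (H : {set {perm V}}) (e : rel V) : Prop :=
  forall u v u' v', e u v -> e u' v' ->
    exists2 m, m \in H & m u = u' /\ m v = v'.

Definition two_arc_transitive (V : finType) (H : {set {perm V}}) (e : rel V)
  : Prop :=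
  forall u0 u1 u2 v0 v1 v2,
    e u0 u1 -> e u1 u2 -> u0 != u2 ->
    e v0 v1 -> e v1 v2 -> v0 != v2 ->
    exists2 s, s \in H & [/\ s u0 = v0, s u1 = v1 & s u2 = v2].

(* Main.v *)
Require Import Defs.
From mathcomp Require Import all_boot all_fingroup all_solvable.
Set Implicit Arguments. Unset Strict Implicit. Unset Printing Implicit Defensive.

Lemma wr1E (D : finType) l (g : {ffun 'I_l -> {perm D}}) x i :
  wr_act g 1%g x i = g i (x i).
Proof. by rewrite /wr_act ffunE invg1 perm1. Qed.

Lemma decomp (D : finType) l (M : {set {perm {ffun 'I_l -> D}}}) s :
  M = base_prod (component M) -> s \in M ->
  exists g : {ffun 'I_l -> {perm D}},
    (forall i, g i \in component M i) /\ forall x i, s x i = g i (x i).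
Proof.
move=> eM sM; have: s \in base_prod (component M) by rewrite -eM.
rewrite inE => /existsP [g /andP [/forallP gi /forallP sx]].
by exists g; split=> // x i; rewrite (eqP (sx x)) wr1E.
Qed.

Lemma comp_intro (D : finType) l (M : {set {perm {ffun 'I_l -> D}}}) i (p : {perm D}) :
  M = base_prod (component M) ->
  (exists2 s, s \in M & forall x, s x i = p (x i)) -> p \in component M i.
Proof.
move=> eM [s sM sx]; rewrite inE; apply/existsP; exists s; rewrite sM /=.
apply/andP; split; last by apply/forallP => x; rewrite sx.
have [g [_ gx]] := decomp eM sM.
apply/existsP; exists g; apply/existsP; exists 1%g; rewrite perm1 eqxx /=.
by apply/forallP => x; apply/eqP/ffunP => j; rewrite gx wr1E.
Qed.

Lemma comp_elim (D : finType) l (M : {set {perm {ffun 'I_l -> D}}}) i (p : {perm D}) :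
  p \in component M i -> exists2 s, s \in M & forall x, s x i = p (x i).
Proof.
rewrite inE => /existsP [s /andP [sM /andP [_ /forallP sx]]].
by exists s => // x; rewrite (eqP (sx x)).
Qed.

Lemma compose (D : finType) l (M : {set {perm {ffun 'I_l -> D}}})
   (p : 'I_l -> {perm D}) :
  M = base_prod (component M) -> (forall i, p i \in component M i) ->
  exists2 s, s \in M & forall x i, s x i = p i (x i).
Proof.
move=> eM pi.
pose f x := wr_act (finfun p) 1%g x.
have finj : injective f.
  move=> x y /ffunP H; apply/ffunP => i; have := H i.
  by rewrite /f !wr1E => /perm_inj.
exists (perm finj).
  rewrite eM inE; apply/existsP; exists (finfun p); apply/andP; split.
    by apply/forallP => i; rewrite ffunE.
  by apply/forallP => x; rewrite permE.
by move=> x i; rewrite permE /f wr1E ffunE.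
Qed.

Lemma comp1 (D : finType) l (M : {group {perm {ffun 'I_l -> D}}}) i :
  M = base_prod (component M) :> {set _} -> 1%g \in component M i.
Proof.
move=> eM; apply: comp_intro => //; exists 1%g => // x; by rewrite !perm1.
Qed.

Lemma compM (D : finType) l (M : {group {perm {ffun 'I_l -> D}}}) i (p q : {perm D}) :
  M = base_prod (component M) :> {set _} ->
  p \in component M i -> q \in component M i -> (p * q)%g \in component M i.
Proof.
move=> eM /comp_elim [s sM sx] /comp_elim [t tM tx]; apply: comp_intro => //.
by exists (s * t)%g; [rewrite groupM | move=> x; rewrite !permM tx sx].
Qed.

Lemma og_sym (D : finType) (H : {set {perm D}}) a b u v :
  orbit_graph H a b u v = orbit_graph H a b v u.
Proof.
by apply/existsP/existsP => -[p /andP [pH o]]; exists p; rewrite pH orbC.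
Qed.

Lemma edgeE (D : finType) l (G M : {group {perm {ffun 'I_l -> D}}})
    (e : rel {ffun 'I_l -> D}) a b :
  M \subset G -> (forall s, s \in G -> is_aut e s) -> arc_transitive M e ->
  M = base_prod (component M) :> {set _} -> symmetric e ->
  e [ffun => a] b ->
  forall x y, e x y = [forall k, orbit_graph (component M k) a (b k) (x k) (y k)].
Proof.
move=> MG eaut arcT eM esym eab x y; apply/idP/forallP.
  move=> exy k; have [m mM [mx my]] := arcT _ _ _ _ eab exy.
  have [g [gi gx]] := decomp eM mM.
  by apply/existsP; exists (g k); rewrite gi -mx -my !gx ffunE !eqxx.
move=> H.
have eba : e b [ffun => a] by rewrite esym.
have [m' m'M [m'a m'b]] := arcT _ _ _ _ eab eba.
have [g' [g'i g'x]] := decomp eM m'M.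
have ga k : g' k a = b k by rewrite -m'a g'x ffunE.
have gb k : g' k (b k) = a by move/ffunP: m'b => /(_ k); rewrite g'x ffunE.
have: forall k, exists p : {perm D},
    p \in component M k /\ p a = x k /\ p (b k) = y k.
  move=> k; have /existsP [p /andP [pM /orP [/andP [/eqP pa /eqP pb]
     | /andP [/eqP pa /eqP pb]]]] := H k.
    by exists p.
  exists (g' k * p)%g; split; first by rewrite compM.
  by rewrite !permM ga gb.
move=> /fin_all_exists [P HP].
have [s sM sx] := compose eM (fun k => proj1 (HP k)).
have -> : x = s [ffun => a] by apply/ffunP => k; rewrite sx ffunE (proj1 (proj2 (HP k))).
have -> : y = s b by apply/ffunP => k; rewrite sx (proj2 (proj2 (HP k))).
by rewrite eaut // (subsetP MG).
Qed.

Lemma forall_single (T : finType) (P : pred T) k :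
  (forall i, i != k -> P i) -> [forall i, P i] = P k.
Proof.
move=> H; apply/forallP/idP => [/(_ k) // | Pk i].
by case: (eqVneq i k) => [-> | /H].
Qed.

Lemma coord_iso (D : finType) l (e : rel {ffun 'I_l -> D}) (R : 'I_l -> rel D)
   a b (g : {perm {ffun 'I_l -> D}}) (gg : {ffun 'I_l -> {perm D}}) (h : {perm 'I_l}) :
  (forall x y, e x y = [forall k, R k (x k) (y k)]) -> e [ffun => a] b ->
  is_aut e g -> (forall x, g x = wr_act gg h x) ->
  forall k u v, R (h k) (gg k u) (gg k v) = R k u v.
Proof.
move=> E eab aut rep k u v.
have base i : R i (gg (h^-1 i)%g a) (gg (h^-1 i)%g (b (h^-1 i)%g)).
  have := aut [ffun => a] b; rewrite eab E => /forallP /(_ i).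
  by rewrite !rep !ffunE.
have Eab i : R i a (b i) by move: eab; rewrite E => /forallP /(_ i); rewrite ffunE.
pose x' : {ffun 'I_l -> D} := [ffun i => if i == k then u else a].
pose y' : {ffun 'I_l -> D} := [ffun i => if i == k then v else b i].
have := aut x' y'; rewrite !E (forall_single (k := h k)); last first.
  move=> i ihk; rewrite !rep !ffunE.
  have -> : ((h^-1)%g i == k) = false.
    by apply/negbTE; apply: contra ihk => /eqP <-; rewrite permKV.
  exact: base.
rewrite (forall_single (k := k)); last first.
  by move=> i /negbTE ik; rewrite !ffunE ik.
by rewrite !rep !ffunE permK eqxx.
Qed.

Lemma coord_trans (D : finType) l (G M : {group {perm {ffun 'I_l -> D}}}) (i1 : 'I_l) :
  1 < #|D| -> G \subset wreath_set D l -> (M <| G)%g -> minnormal M G ->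
  [transitive M, on [set: {ffun 'I_l -> D}] | 'P] ->
  M = base_prod (component M) :> {set _} ->
  forall j, exists g, g \in G /\ exists (gg : {ffun 'I_l -> {perm D}}) (h : {perm 'I_l}),
      h i1 = j /\ forall x, g x = wr_act gg h x.
Proof.
move=> hD GW nMG minM MT eM.
have [d1 [d2 [_ _ d12]]] : exists d1 d2 : D, [/\ d1 \in D, d2 \in D & d1 != d2].
  by apply/card_gt1P.
have repG g : g \in G -> exists (gg : {ffun 'I_l -> {perm D}}) (h : {perm 'I_l}),
    forall x, g x = wr_act gg h x.
  move=> gG; have := subsetP GW g gG; rewrite inE => /existsP [gg /existsP [h /forallP H]].
  by exists gg, h => x; rewrite (eqP (H x)).
pose J := [set k | [exists g in G, exists gg : {ffun 'I_l -> {perm D}},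
   exists h : {perm 'I_l}, (h i1 == k) && [forall x, g x == wr_act gg h x]]].
have Jcl k g gg h : k \in J -> g \in G -> (forall x, g x = wr_act gg h x) -> h k \in J.
  rewrite inE => /existsP [g1 /andP [g1G /existsP [gg1 /existsP [h1 /andP [/eqP h1k /forallP rep1]]]]] gG rep.
  rewrite inE; apply/existsP; exists (g1 * g)%g; rewrite groupM //=.
  apply/existsP; exists [ffun m => (gg1 m * gg (h1 m))%g].
  apply/existsP; exists (h1 * h)%g; rewrite permM h1k eqxx /=.
  apply/forallP => x; apply/eqP/ffunP => i.
  rewrite permM rep ffunE (eqP (rep1 x)) !ffunE invMg permM permM permKV.
  by [].
have i1J : i1 \in J.
  rewrite inE; apply/existsP; exists 1%g; rewrite group1 /=.
  apply/existsP; exists [ffun => 1%g]; apply/existsP; exists 1%g; rewrite perm1 eqxx /=.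
  by apply/forallP => x; apply/eqP/ffunP => i; rewrite wr1E ffunE !perm1.
pose S := [set s : {perm {ffun 'I_l -> D}} |
   [forall x, forall k, (k \notin J) ==> (s x k == x k)]].
have Sg : group_set S.
  apply/group_setP; split.
    by rewrite inE; apply/forallP => x; apply/forallP => k; rewrite perm1 eqxx implybT.
  move=> s t; rewrite !inE => /forallP sS /forallP tS.
  apply/forallP => x; apply/forallP => k; apply/implyP => kJ.
  rewrite permM; have := forallP (tS (s x)) k; rewrite kJ /= => /eqP ->.
  by have := forallP (sS x) k; rewrite kJ.
pose SG := Group Sg.
have SJ t g : t \in S -> g \in G -> (t ^ g)%g \in S.
  move=> tS gG; have [gg [h rep]] := repG g gG.
  rewrite inE; apply/forallP => x; apply/forallP => k; apply/implyP => kJ.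
  have hkJ : (h^-1)%g k \notin J.
    by apply: contra kJ => /Jcl /(_ gG rep); rewrite permKV.
  rewrite conjgE !permM rep ffunE.
  move: tS; rewrite inE => /forallP /(_ ((g^-1)%g x)) /forallP /(_ ((h^-1)%g k)).
  rewrite hkJ /= => /eqP ->.
  by have := rep ((g^-1)%g x) => /ffunP /(_ k); rewrite permKV ffunE => <-.
have nS : G \subset 'N(SG)%g.
  apply/subsetP => g gG; rewrite inE; apply/subsetP => y; rewrite mem_conjg => yS.
  by rewrite -(conjgKV g y); apply: SJ.
have nN : G \subset 'N(M :&: SG)%g := normsI (normal_norm nMG) nS.
have [_ minH] := mingroupP minM.
pose x0 : {ffun 'I_l -> D} := [ffun => d1].
pose y0 (j : 'I_l) : {ffun 'I_l -> D} := [ffun k => if k == j then d2 else d1].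
have moveM j : exists2 m, m \in M & m x0 = y0 j.
  have [m mM ->] := atransP2 MT (in_setT x0) (in_setT (y0 j)).
  by exists m.
have N1 : (M :&: SG)%G != 1%G.
  have [m mM mx] := moveM i1.
  have [g [gi gx]] := decomp eM mM.
  have gd : g i1 d1 = d2 by move/ffunP: mx => /(_ i1); rewrite gx !ffunE eqxx.
  pose p k := if k == i1 then g i1 else 1%g.
  have pi k : p k \in component M k.
    by rewrite /p; case: eqP => [-> | _]; [exact: gi | exact: comp1].
  have [s sM sx] := compose eM pi.
  apply/trivgPn; exists s.
    rewrite inE sM /= inE; apply/forallP => x; apply/forallP => k; apply/implyP => kJ.
    have kn : k == i1 = false by apply/negbTE; apply: contra kJ => /eqP ->.
    by rewrite sx /p kn perm1.
  apply: contra d12 => /eqP s1.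
  by have := sx x0 i1; rewrite s1 perm1 /p eqxx !ffunE gd => ->.
have NM := minH (M :&: SG)%G (introT andP (conj N1 nN)) (subsetIl _ _).
have MS : M \subset S by rewrite -NM subsetIr.
move=> j.
have jJ : j \in J.
  apply: contraT => jJ.
  have [m mM mx] := moveM j.
  have := subsetP MS m mM; rewrite inE => /forallP /(_ x0) /forallP /(_ j).
  by rewrite jJ mx !ffunE eqxx eq_sym (negbTE d12).
move: jJ; rewrite inE => /existsP [g /andP [gG /existsP [gg /existsP [h /andP [/eqP hj /forallP rep]]]]].
by exists g; split => //; exists gg, h; split => // x; rewrite (eqP (rep x)).
Qed.

Lemma conn1 (T : finType) (e : rel T) :
  symmetric e -> (forall x y y', e x y -> e x y' -> y = y') ->
  forall x y, connect e x y -> y = x \/ e x y.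
Proof.
move=> esym deg x y /connectP [p pth ->].
suff H : forall z, z = x \/ e x z -> path e z p -> last z p = x \/ e x (last z p).
  by apply: H pth; left.
elim: p {pth} => [|w p IH] z //= Hz /andP [ezw pth]; apply: IH pth.
case: Hz => [zx|exz]; first by right; rewrite -zx.
by left; apply: deg ezw _; rewrite esym.
Qed.

Lemma sigma_ex (D : finType) l (G M : {group {perm {ffun 'I_l -> D}}})
    (e : rel {ffun 'I_l -> D}) (i1 : 'I_l) a (b : {ffun 'I_l -> D}) :
  1 < #|D| -> G \subset wreath_set D l -> (M <| G)%g -> minnormal M G ->
  [transitive M, on [set: {ffun 'I_l -> D}] | 'P] ->
  M = base_prod (component M) :> {set _} ->
  (forall s, s \in G -> is_aut e s) ->
  (forall x y, e x y = [forall k, orbit_graph (component M k) a (b k) (x k) (y k)]) ->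
  e [ffun => a] b ->
  forall j, exists s : {perm D}, forall u v,
    orbit_graph (component M i1) a (b i1) (s u) (s v) =
    orbit_graph (component M j) a (b j) u v.
Proof.
move=> hD GW nMG minM MT eM eaut E eab j.
have [g [gG [gg [h [hj rep]]]]] := coord_trans i1 hD GW nMG minM MT eM j.
exists (gg i1)^-1%g => u v.
have := @coord_iso _ _ e (fun k => orbit_graph (component M k) a (b k)) _ _ _ _ _ E eab (eaut g gG) rep i1 ((gg i1)^-1%g u) ((gg i1)^-1%g v).
by rewrite !permKV hj => <-.
Qed.

Theorem proposition3p4 (D : finType) (l : nat)
    (G M : {group {perm {ffun 'I_l -> D}}}) (e : rel {ffun 'I_l -> D}) :
  1 < #|D| -> 1 < l ->
  G \subset wreath_set D l ->
  (M <| G)%g -> minnormal M G ->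
  [transitive M, on [set: {ffun 'I_l -> D}] | 'P] ->
  symmetric e -> irreflexive e ->
  (forall x y, connect e x y) ->
  (forall s, s \in G -> is_aut e s) ->
  arc_transitive M e ->
  normal_inclusion M ->
  forall i1 : 'I_l, val i1 = 0 ->
    (exists (a : D) (b : {ffun 'I_l -> D}), e [ffun => a] b) /\
    (forall (a : D) (b : {ffun 'I_l -> D}), e [ffun => a] b ->
       graph_iso e (@pow_graph D l (orbit_graph (component M i1) a (b i1)))) /\
    ~ two_arc_transitive G e.
Proof.
move=> hD hl GW nMG minM MT esym eirr econ eaut arcT [_ eM] i1 i10.
have MG : M \subset G := normal_sub nMG.
have [d1 [d2 [_ _ d12]]] : exists d1 d2 : D, [/\ d1 \in D, d2 \in D & d1 != d2].
  by apply/card_gt1P.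
pose k1 : 'I_l := Ordinal hl.
have k1i1 : k1 != i1 by apply/eqP => /(f_equal val); rewrite /= i10.
have ex_edge : exists (a : D) (b : {ffun 'I_l -> D}), e [ffun => a] b.
  pose x : {ffun 'I_l -> D} := [ffun => d1].
  pose y : {ffun 'I_l -> D} := [ffun => d2].
  have xy : x != y by apply/eqP => /ffunP /(_ i1); rewrite !ffunE; apply/eqP.
  have [z [z' ezz']] : exists z z', e z z'.
    move: (econ x y) => /connectP [[|z p] /= pth lst].
      by move: xy; rewrite lst eqxx.
    by exists x, z; case/andP: pth.
  have [m mM mz] := atransP2 MT (in_setT z) (in_setT x).
  exists d1, (m z'); rewrite -[[ffun => d1]]/x mz /= eaut //.
  exact: (subsetP MG).
split=> //.
have part2 : forall (a : D) (b : {ffun 'I_l -> D}), e [ffun => a] b ->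
   (forall x y, e x y = [forall k, orbit_graph (component M k) a (b k) (x k) (y k)]) /\
   exists sg : 'I_l -> {perm D}, forall j u v,
    orbit_graph (component M i1) a (b i1) (sg j u) (sg j v) =
    orbit_graph (component M j) a (b j) u v.
  move=> a b eab.
  have E := edgeE MG eaut arcT eM esym eab.
  split => //.
  exact: fin_all_exists (sigma_ex i1 hD GW nMG minM MT eM eaut E eab).
split.
  move=> a b eab; have [E [sg Hsg]] := part2 a b eab.
  exists (fun x : {ffun 'I_l -> D} => [ffun j => sg j (x j)]); split.
    exists (fun x : {ffun 'I_l -> D} => [ffun j => (sg j)^-1%g (x j)]) => x; apply/ffunP => j;
      by rewrite !ffunE ?permK ?permKV.
  move=> x y; rewrite E /pow_graph; apply: eq_forallb => j.
  by rewrite !ffunE Hsg.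
have [a [b eab]] := ex_edge.
have [E [sg Hsg]] := part2 a b eab.
pose R j := orbit_graph (component M j) a (b j).
have Rsym j u v : R j u v = R j v u by apply: og_sym.
pose Q j := [exists w, exists n, exists n', [&& R j w n, R j w n' & n != n']].
have allQ : forall j, Q j.
  move=> j0; apply: contraT => nQ.
  have P0 : forall w n n', R j0 w n -> R j0 w n' -> n = n'.
    move=> w n n' h1 h2; case: (eqVneq n n') => // neq; case/negP: nQ.
    by apply/existsP; exists w; apply/existsP; exists n; apply/existsP; exists n';
      rewrite h1 h2 neq.
  have Pi1 : forall w n n', R i1 w n -> R i1 w n' -> n = n'.
    move=> w n n' h1 h2.
    have := P0 ((sg j0)^-1%g w) ((sg j0)^-1%g n) ((sg j0)^-1%g n').
    rewrite /R -!(Hsg j0) !permKV => /(_ h1 h2); exact: perm_inj.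
  have Pk : forall k w n n', R k w n -> R k w n' -> n = n'.
    move=> k w n n'; rewrite /R -(Hsg k w n) -(Hsg k w n') => h1 h2; apply: (@perm_inj _ (sg k)).
    exact: Pi1 h1 h2.
  have deg : forall x y y', e x y -> e x y' -> y = y'.
    move=> x y y'; rewrite !E => /forallP h1 /forallP h2; apply/ffunP => k.
    exact: Pk (h1 k) (h2 k).
  pose x : {ffun 'I_l -> D} := [ffun => d1].
  pose y1 : {ffun 'I_l -> D} := [ffun => d2].
  pose y2 : {ffun 'I_l -> D} := [ffun k => if k == i1 then d1 else d2].
  have ne1 : y1 != x by apply/eqP => /ffunP /(_ i1); rewrite !ffunE; apply/eqP; rewrite eq_sym.
  have ne2 : y2 != x by apply/eqP => /ffunP /(_ k1); rewrite !ffunE (negbTE k1i1);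
    apply/eqP; rewrite eq_sym.
  have ne12 : y1 != y2 by apply/eqP => /ffunP /(_ i1); rewrite !ffunE eqxx; apply/eqP;
    rewrite eq_sym.
  have [/eqP|e1] := conn1 esym deg (econ x y1); first by rewrite (negbTE ne1).
  have [/eqP|e2] := conn1 esym deg (econ x y2); first by rewrite (negbTE ne2).
  by move: ne12; rewrite (deg _ _ _ e1 e2) eqxx.
have: forall j, exists t : D * D * D, [&& R j t.1.1 t.1.2, R j t.1.1 t.2 & t.1.2 != t.2].
  move=> j; have /existsP [w /existsP [n /existsP [n' H]]] := allQ j.
  by exists (w, n, n').
move=> /fin_all_exists [t Ht].
pose x1 : {ffun 'I_l -> D} := [ffun j => (t j).1.1].
pose x0 : {ffun 'I_l -> D} := [ffun j => (t j).1.2].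
pose xA : {ffun 'I_l -> D} := [ffun j => if j == i1 then (t j).2 else (t j).1.2].
pose xB : {ffun 'I_l -> D} := [ffun j => (t j).2].
have e01 : e x0 x1.
  by rewrite E; apply/forallP => j; rewrite !ffunE -/(R j) Rsym; case/and3P: (Ht j).
have e1A : e x1 xA.
  rewrite E; apply/forallP => j; rewrite !ffunE -/(R j).
  by case: ifP => _; case/and3P: (Ht j).
have e1B : e x1 xB.
  by rewrite E; apply/forallP => j; rewrite !ffunE -/(R j); case/and3P: (Ht j).
have n0A : x0 != xA.
  by apply/eqP => /ffunP /(_ i1); rewrite !ffunE eqxx; apply/eqP; case/and3P: (Ht i1).
have n0B : x0 != xB.
  by apply/eqP => /ffunP /(_ i1); rewrite !ffunE; apply/eqP; case/and3P: (Ht i1).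
move=> T2.
have [s sG [s0 s1 sA]] := T2 _ _ _ _ _ _ e01 e1A n0A e01 e1B n0B.
have := subsetP GW s sG; rewrite inE => /existsP [gg /existsP [h /forallP rep]].
move/ffunP: s0 => /(_ (h k1)); move/ffunP: sA => /(_ (h k1)).
rewrite !(eqP (rep _)) !ffunE !permK (negbTE k1i1) => q1 q2.
by move: (Ht (h k1)) => /and3P [_ _]; rewrite -q1 -q2 eqxx.
Qed.
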